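(* Let $\ell,d,\rho$ be integers with $1\le\ell\le m$, $1\le d\le\ell(q-1)$ and $0\le\rho\le|\mathbb{H}^{(\ell)}_{\le d-1}|$. Then $\mathsf{SH}^{(\ell)}(\mathcal{M}^{(\ell)}_{d-1}(\rho))\cap\mathbb{H}^{(\ell)}_d=\mathcal{L}^{(\ell)}_d(\rho')$ for some nonnegative integer $\rho'$. Moreover, if $\rho$ is positive, then so is $\rho'$.
   Context: $q$ is a prime power and $m$ a positive integer. For $0\le\ell\le m$, $\mathbb{H}^{(\ell)}=\{x_0^{a_0}\cdots x_{\ell-1}^{a_{\ell-1}}:0\le a_j\le q-1\}$; $\mathbb{H}^{(\ell)}_d$ and $\mathbb{H}^{(\ell)}_{\le d}$ are its elements of degree $d$, resp. degree $\le d$. For $\mathcal{T}\subseteq\mathbb{H}^{(\ell)}$, $\mathsf{SH}^{(\ell)}(\mathcal{T})=\{\mu\in\mathbb{H}^{(\ell)}:\nu\mid\mu\text{ for some }\nu\in\mathcal{T}\}$. Lexicographic order: $x_0^{b_0}\cdots\prec x_0^{a_0}\cdots$ iff at the first index where exponents differ $a_i>b_i$. $\mathcal{M}^{(\ell)}_{k}(\rho)$ is the set of the first $\rho$ elements of $\mathbb{H}^{(\ell)}_{\le k}$ in descending lexicographic order; $\mathcal{L}^{(\ell)}_d(\rho')$ is the set of the first $\rho'$ elements of $\mathbb{H}^{(\ell)}_d$ in descending lexicographic order. *)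

(* Defs.v *)
From mathcomp Require Import all_boot all_order.
Set Implicit Arguments. Unset Strict Implicit. Unset Printing Implicit Defensive.

(* The monomials x_0^{a_0} ... x_{l-1}^{a_{l-1}} with 0 <= a_j <= q-1,
   represented by their exponent vectors a : 'I_l -> 'I_q.  This is H^(l). *)
Notation mon l q := {ffun 'I_l -> 'I_q}.

Section Mon.
Variables l q : nat.

Definition mdeg (mu : mon l q) : nat := \sum_(i < l) (mu i : nat).

Definition mdvd (nu mu : mon l q) : bool := [forall i, (nu i : nat) <= mu i].

(* lex_lt b a  <=>  b ≺ a : at the first index where exponents differ, a_i > b_i *)
Definition lex_lt (b a : mon l q) : bool :=
  [exists i : 'I_l, [forall j : 'I_l, (j < i) ==> (a j == b j)] && ((b i : nat) < a i)].

Definition Hle (k : nat) : {set mon l q} := [set mu | mdeg mu <= k].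
Definition Hd (d : nat) : {set mon l q} := [set mu | mdeg mu == d].

Definition SH (T : {set mon l q}) : {set mon l q} :=
  [set mu | [exists nu in T, mdvd nu mu]].

(* the first r elements of A in descending lexicographic order:
   those mu in A with fewer than r elements of A lex-greater than mu *)
Definition first_lex (A : {set mon l q}) (r : nat) : {set mon l q} :=
  [set mu in A | #|[set nu in A | lex_lt mu nu]| < r].

Definition Mset (k r : nat) : {set mon l q} := first_lex (Hle k) r.
Definition Lset (d r : nat) : {set mon l q} := first_lex (Hd d) r.

End Mon.

(* Main.v *)
Require Import Defs.
From mathcomp Require Import all_boot all_order.
From mathcomp Require Import zify.
Set Implicit Arguments. Unset Strict Implicit. Unset Printing Implicit Defensive.

Section Proofs.
Variables l q : nat.
Implicit Types a b c mu nu : mon l q.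

Lemma lex_irr a : ~~ lex_lt a a.
Proof. by apply/existsP => -[i /andP[_]]; rewrite ltnn. Qed.

Lemma lex_trans a b c : lex_lt c b -> lex_lt b a -> lex_lt c a.
Proof.
move=> /existsP[j /andP[/forallP Hj cj]] /existsP[i /andP[/forallP Hi bi]].
apply/existsP.
case: (ltngtP i j) => [ij|ji|/ord_inj eij].
- exists i; apply/andP; split.
  + apply/forallP=> k; apply/implyP=> ki.
    rewrite (eqP (implyP (Hi k) ki)). exact: (implyP (Hj k) (ltn_trans ki ij)).
  + by rewrite -(eqP (implyP (Hj i) ij)).
- exists j; apply/andP; split.
  + apply/forallP=> k; apply/implyP=> kj.
    rewrite (eqP (implyP (Hi k) (ltn_trans kj ji))). exact: (implyP (Hj k) kj).
  + by rewrite (eqP (implyP (Hi j) ji)).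
- subst j; exists i; apply/andP; split.
  + apply/forallP=> k; apply/implyP=> ki.
    rewrite (eqP (implyP (Hi k) ki)). exact: (implyP (Hj k) ki).
  + exact: ltn_trans cj bi.
Qed.

Lemma lex_total a b : a != b -> lex_lt a b || lex_lt b a.
Proof.
move=> nab.
have [i0 Hi0] : exists i : 'I_l, a i != b i.
  apply/existsP; apply: contraNT nab => /existsPn H; rewrite ?negbK.
  apply/eqP/ffunP => i; apply/eqP; move: (H i); by rewrite negbK.
have [i Hi Hmin] := arg_minnP (P := fun i : 'I_l => a i != b i) (fun i => val i) Hi0.
have agree : forall j : 'I_l, j < i -> a j == b j.
  move=> j ji; apply: contraTT ji => nj; rewrite -leqNgt; exact: Hmin.
case: (ltngtP (a i) (b i)) => [lt|gt|e].
- apply/orP; left; apply/existsP; exists i; rewrite lt andbT.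
  apply/forallP => j; apply/implyP => ji; rewrite eq_sym; exact: agree.
- apply/orP; right; apply/existsP; exists i; rewrite gt andbT.
  apply/forallP => j; apply/implyP => ji; exact: agree.
- by move/ord_inj: e Hi => ->; rewrite eqxx.
Qed.

Lemma dvd_notlex nu mu : mdvd nu mu -> ~~ lex_lt mu nu.
Proof. move=> /forallP H; apply/negP => /existsP[i /andP[_]]; by rewrite ltnNge H. Qed.

Lemma dvd_trans a b c : mdvd a b -> mdvd b c -> mdvd a c.
Proof.
move=> /forallP H1 /forallP H2; apply/forallP => i; exact: leq_trans (H1 i) (H2 i).
Qed.

Lemma dvd_refl a : mdvd a a.
Proof. by apply/forallP. Qed.

Lemma cnt_lt (A : {set mon l q}) mu nu : lex_lt mu nu -> nu \in A ->
  #|[set x in A | lex_lt nu x]| < #|[set x in A | lex_lt mu x]|.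
Proof.
move=> H nuA; apply: proper_card; apply/properP; split.
- apply/subsetP => x; rewrite !inE => /andP[xA nx]; by rewrite xA (lex_trans H nx).
- exists nu; first by rewrite !inE nuA H.
  by rewrite !inE (negbTE (lex_irr nu)) andbF.
Qed.

Lemma first_up (A : {set mon l q}) r mu nu : mu \in first_lex A r -> nu \in A ->
  lex_lt mu nu -> nu \in first_lex A r.
Proof.
rewrite !inE => /andP[_ c] nuA H; rewrite nuA /=; exact: ltn_trans (cnt_lt H nuA) c.
Qed.

Lemma init_seg (A S : {set mon l q}) : S \subset A ->
  (forall mu nu, mu \in S -> nu \in A -> lex_lt mu nu -> nu \in S) ->
  S = first_lex A #|S|.
Proof.
move=> sSA up; apply/setP => mu; rewrite inE.
case: (boolP (mu \in S)) => muS.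
- have muA := subsetP sSA _ muS. rewrite muA /=; apply/esym.
  apply: proper_card; apply/properP; split.
  + apply/subsetP => x; rewrite inE => /andP[xA mx]; exact: up mu x muS xA mx.
  + exists mu => //; by rewrite inE (negbTE (lex_irr mu)) andbF.
- apply/esym/negbTE; rewrite negb_and -leqNgt.
  case: (boolP (mu \in A)) => //= muA.
  apply: subset_leq_card; apply/subsetP => x xS; rewrite inE (subsetP sSA _ xS) /=.
  have : x != mu by apply: contraNneq muS => <-.
  move/lex_total => /orP[xm|//].
  by rewrite (up _ _ xS muA xm) in muS.
Qed.

Lemma key nu mu' k : lex_lt nu mu' -> mdeg nu <= k ->
  exists nu' : mon l q, [/\ mdvd nu' mu', (nu' == nu) || lex_lt nu nu' & mdeg nu' <= k].
Proof.
move=> /existsP[i /andP[/forallP Hi lti]] dnu.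
case: (boolP [exists j : 'I_l, (i < j) && (0 < nu j)]) => [/existsP[j0 /andP[ij0 pos]] | /existsPn none].
- pose f (j : 'I_l) := if j < i then (nu j : nat) else if (j : nat) == i then (nu i).+1 else 0.
  have fq : forall j, f j < q.
    move=> j; rewrite /f; case: ifP => _; first exact: ltn_ord.
    case: ifP => _; last exact: leq_ltn_trans (leq0n _) (ltn_ord (nu j)).
    exact: leq_ltn_trans lti (ltn_ord (mu' i)).
  pose w : mon l q := [ffun j => insubd (nu j) (f j)].
  have wE : forall j, (w j : nat) = f j by move=> j; rewrite ffunE val_insubd fq.
  exists w; split.
  + apply/forallP => j; rewrite wE /f.
    case: (ltngtP j i) => [ji|ij|e].
    * by rewrite (eqP (implyP (Hi j) ji)).
    * by [].
    * by move/ord_inj: e => ->.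
  + apply/orP; right; apply/existsP; exists i; apply/andP; split.
    * apply/forallP => j; apply/implyP => ji; by rewrite -val_eqE /= wE /f ji.
    * by rewrite wE /f ltnn eqxx.
  + have j0i : j0 != i by apply: contraTneq ij0 => ->; rewrite ltnn.
    have pw : forall j, j != i -> (w j : nat) <= nu j.
      move=> j nji; rewrite wE /f; case: ifP => // _.
      rewrite -val_eqE /= in nji; by rewrite (negbTE nji).
    have wj0 : (w j0 : nat) = 0.
      by rewrite wE /f ltnNge (ltnW ij0) /= gtn_eqF.
    have wi : (w i : nat) = (nu i).+1 by rewrite wE /f ltnn eqxx.
    rewrite /mdeg in dnu *.
    rewrite (bigD1 i) //= (bigD1 j0) //= in dnu.
    rewrite (bigD1 i) //= (bigD1 j0) //= wj0 wi.
    have : \sum_(j < l | (j != i) && (j != j0)) (w j : nat) <=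
           \sum_(j < l | (j != i) && (j != j0)) (nu j : nat).
      apply: leq_sum => j /andP[nji _]; exact: pw.
    move=> hS; apply: leq_trans _ dnu; rewrite add0n addSnnS leq_add2l -add1n; exact: leq_add pos hS.
- exists nu; split.
  + apply/forallP => j.
    case: (ltngtP j i) => [ji|ij|e].
    * by rewrite (eqP (implyP (Hi j) ji)).
    * have := none j; rewrite ij /= -leqNgt leqn0 => /eqP ->; by [].
    * by move/ord_inj: e => ->; exact: ltnW.
  + by rewrite eqxx.
  + exact: dnu.
Qed.

Lemma ext d : d <= l * (q - 1) -> forall n nu, mdeg nu + n = d ->
  exists mu : mon l q, mdvd nu mu && (mdeg mu == d).
Proof.
move=> hd n; elim: n => [|n IH] nu e.
  exists nu; rewrite addn0 in e; by rewrite e eqxx dvd_refl.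
case: (pickP (fun i : 'I_l => (nu i).+1 < q)) => [i hi | none]; last first.
  have : \sum_(i < l) (q - 1) <= mdeg nu.
    apply: leq_sum => i _; have := none i; simpl; lia.
  rewrite sum_nat_const card_ord; lia.
pose f (j : 'I_l) := if j == i then (nu j).+1 else nu j.
have fq : forall j, f j < q.
  move=> j; rewrite /f; case: ifP => [/eqP -> //|_]; exact: ltn_ord.
pose w : mon l q := [ffun j => insubd (nu j) (f j)].
have wE : forall j, (w j : nat) = f j by move=> j; rewrite ffunE val_insubd fq.
have dw : mdeg w = (mdeg nu).+1.
  rewrite /mdeg (bigD1 i) //= [in RHS](bigD1 i) //= wE /f eqxx addSn; congr (_ + _).+1.
  apply: eq_bigr => j nji; by rewrite wE /f (negbTE nji).
have [mu /andP[wmu dmu]] := IH w (etrans (congr1 (addn^~ n) dw) (etrans (addSnnS _ _) e)).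
exists mu; rewrite dmu andbT; apply: dvd_trans wmu.
apply/forallP => j; rewrite wE /f; case: ifP => // _; exact: leqnSn.
Qed.

End Proofs.

Theorem corollary3p3 (q m l d rho : nat)
  (hq : exists p k, [/\ prime p, 0 < k & q = p ^ k])
  (hm : 0 < m) (hl1 : 1 <= l) (hlm : l <= m)
  (hd1 : 1 <= d) (hd2 : d <= l * (q - 1))
  (hrho : rho <= #|Hle l q d.-1|) :
  exists rho' : nat,
    [/\ rho' <= #|Hd l q d|,
        SH (Mset l q d.-1 rho) :&: Hd l q d = Lset l q d rho'
      & 0 < rho -> 0 < rho'].
Proof.
set M := Mset l q d.-1 rho.
set T := SH M :&: Hd l q d.
have MH : forall nu, nu \in M -> mdeg nu <= d.-1.
  by move=> nu; rewrite /M /Mset !inE => /andP[].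
exists #|T|; split.
- apply: subset_leq_card; exact: subsetIr.
- apply: init_seg; first exact: subsetIr.
  move=> mu mu'; rewrite !inE => /andP[/existsP[nu /andP[nuM dnm]] dmu] dmu' lt.
  rewrite dmu' andbT.
  have numu : lex_lt nu mu'.
    case: (eqVneq nu mu) => [->//|ne].
    move/lex_total: ne => /orP[h|h]; first exact: lex_trans h lt.
    by rewrite (negbTE (dvd_notlex dnm)) in h.
  have [nu' [d' o dg]] := key numu (MH _ nuM).
  apply/existsP; exists nu'; rewrite d' andbT.
  case/orP: o => [/eqP -> //|o].
  apply: first_up nuM _ o; by rewrite inE.
- move=> rho0.
  have q0 : 0 < q by case: hq => p [k [pp _ ->]]; rewrite expn_gt0 prime_gt0.
  pose z : mon l q := [ffun => Ordinal q0].
  have zA : z \in Hle l q d.-1.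
    rewrite inE /mdeg big1 // => i _; by rewrite ffunE.
  have [nu nuA Hmin] := arg_minnP
     (fun x => #|[set y in Hle l q d.-1 | lex_lt x y]|) zA.
  have c0 : #|[set y in Hle l q d.-1 | lex_lt nu y]| = 0.
    apply/eqP; rewrite -leqn0 leqNgt; apply/negP => /card_gt0P[y].
    rewrite inE => /andP[yA ny].
    have := cnt_lt ny yA; have := Hmin y yA; lia.
  have nuM : nu \in M.
    rewrite /M /Mset /first_lex !inE c0 rho0 andbT.
    have h : nu \in Hle l q d.-1 := nuA; by rewrite inE in h.
  have dn := MH _ nuM.
  have [mu /andP[nmu dmu]] := ext hd2 (n := d - mdeg nu) (nu := nu) (subnKC (leq_trans dn (leq_pred _))).
  apply/card_gt0P; exists mu; rewrite !inE dmu andbT.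
  apply/existsP; exists nu; by rewrite nuM.
Qed.
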